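(* Let $\|\cdot\|_{(i)}$, $i\in[k]$, be norms on a finite-dimensional real inner product space $V$ with dual norms $\|\cdot\|^\circ_{(i)}$, let $0\neq x_0\in V$, $\mu_i^\ast=1/\|x_0\|_{(i)}$ and $\|x\|_{\max,\mu^\ast}=\max_i\mu^\ast_i\|x\|_{(i)}$ (so $\|x_0\|_{\max,\mu^\ast}=1$). Then for every $g\in V$, $$\inf_{y\in\mathrm{cone}\,\partial\|\cdot\|_{\max,\mu^\ast}(x_0)}\|g-y\|_2=\inf_{y\in\sum_{i=1}^k\mathrm{cone}\,\partial\|\cdot\|_{(i)}(x_0)}\|g-y\|_2$$ and this equals $$\inf\Big\{\Big\|g-\sum_{i=1}^k x_i\Big\|_2:\ \tau_i\ge0,\ x_i\in V,\ \langle x_i,x_0\rangle=\tau_i\|x_0\|_{\max,\mu^\ast},\ \|x_i\|^\circ_{(i)}\le\tau_i\mu^\ast_i\ \forall i\Big\}.$$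
   Context: $\partial$ denotes the subdifferential; $\mathrm{cone}(S)=\{\tau x:x\in S,\tau>0\}$; sums of sets are Minkowski sums; the dual norm of $\|\cdot\|$ is $\|y\|^\circ=\sup_{\|x\|=1}|\langle x,y\rangle|$. *)

(* Defs.v *)
From Stdlib Require Import Reals Lra ClassicalEpsilon.
Open Scope R_scope.

Fixpoint gsum {A : Type} (zero : A) (add : A -> A -> A) (f : nat -> A) (n : nat) : A :=
  match n with
  | O => zero
  | S m => add (gsum zero add f m) (f m)
  end.

Record IPS := {
  car :> Type;
  vzero : car;
  vadd : car -> car -> car;
  vscal : R -> car -> car;
  inner : car -> car -> R;
  vadd_assoc : forall x y z, vadd x (vadd y z) = vadd (vadd x y) z;
  vadd_comm : forall x y, vadd x y = vadd y x;
  vadd_0 : forall x, vadd x vzero = x;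
  vadd_opp : forall x, vadd x (vscal (-1) x) = vzero;
  vscal_1 : forall x, vscal 1 x = x;
  vscal_assoc : forall a b x, vscal a (vscal b x) = vscal (a * b) x;
  vscal_distr_v : forall a x y, vscal a (vadd x y) = vadd (vscal a x) (vscal a y);
  vscal_distr_s : forall a b x, vscal (a + b) x = vadd (vscal a x) (vscal b x);
  inner_sym : forall x y, inner x y = inner y x;
  inner_add_l : forall x y z, inner (vadd x y) z = inner x z + inner y z;
  inner_scal_l : forall a x y, inner (vscal a x) y = a * inner x y;
  inner_pos : forall x, 0 <= inner x x;
  inner_def : forall x, inner x x = 0 -> x = vzero;
  fin_dim : exists (n : nat) (e : nat -> car), forall v, exists c : nat -> R,
      v = gsum vzero vadd (fun i => vscal (c i) (e i)) n
}.

Arguments vzero {_}. Arguments vadd {_}. Arguments vscal {_}. Arguments inner {_}.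

Definition vsub {V : IPS} (x y : V) : V := vadd x (vscal (-1) y).
Definition vsum {V : IPS} (f : nat -> V) (k : nat) : V := gsum vzero vadd f k.

Definition norm2 {V : IPS} (v : V) : R := sqrt (inner v v).

Definition is_norm {V : IPS} (N : V -> R) : Prop :=
  (forall x, 0 <= N x) /\
  (forall x, N x = 0 -> x = vzero) /\
  (forall a x, N (vscal a x) = Rabs a * N x) /\
  (forall x y, N (vadd x y) <= N x + N y).

(* supremum / infimum of a set of reals (meaningful when nonempty and bounded) *)
Definition Rsup (E : R -> Prop) : R :=
  match excluded_middle_informative (bound E /\ exists x, E x) with
  | left H => proj1_sig (completeness E (proj1 H) (proj2 H))
  | right _ => 0
  end.
Definition Rinf (E : R -> Prop) : R := - Rsup (fun r => E (- r)).

Definition dual_norm {V : IPS} (N : V -> R) (y : V) : R :=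
  Rsup (fun r => exists x, N x = 1 /\ r = Rabs (inner x y)).

Definition subdiff {V : IPS} (f : V -> R) (x0 : V) (g : V) : Prop :=
  forall y, f y >= f x0 + inner g (vsub y x0).

Definition cone {V : IPS} (S : V -> Prop) (y : V) : Prop :=
  exists tau x, 0 < tau /\ S x /\ y = vscal tau x.

Fixpoint rmax_upto (f : nat -> R) (n : nat) : R :=
  match n with
  | O => f O
  | S m => Rmax (rmax_upto f m) (f n)
  end.

(* weighted max norm  ||x||_{max,mu} = max_{i < k} mu_i ||x||_(i)   (k >= 1) *)
Definition max_norm {V : IPS} (k : nat) (mu : nat -> R) (N : nat -> V -> R) (x : V) : R :=
  rmax_upto (fun i => mu i * N i x) (k - 1).

(* Main.v *)
Require Import Defs.
From Stdlib Require Import Reals Lra Lia ClassicalEpsilon FunctionalExtensionality Classical List.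
Open Scope R_scope.


Lemma inner_add_r {V : IPS} (x y z : V) : inner x (vadd y z) = inner x y + inner x z.
Proof. rewrite inner_sym, inner_add_l, (inner_sym _ y), (inner_sym _ z); ring. Qed.
Lemma inner_scal_r {V : IPS} a (x y : V) : inner x (vscal a y) = a * inner x y.
Proof. rewrite inner_sym, inner_scal_l, inner_sym; ring. Qed.
Lemma inner_zero_l {V : IPS} (y : V) : inner vzero y = 0.
Proof.
  assert (H := inner_add_l V vzero vzero y). rewrite vadd_0 in H. lra.
Qed.
Lemma inner_zero_r {V : IPS} (y : V) : inner y vzero = 0.
Proof. rewrite inner_sym; apply inner_zero_l. Qed.

Lemma eq_of_inner {V : IPS} (x y : V) : inner (vsub x y) (vsub x y) = 0 -> x = y.
Proof.
  intro H. apply inner_def in H. unfold vsub in H.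
  assert (E : vadd (vadd x (vscal (-1) y)) y = x).
  { rewrite <- vadd_assoc, (vadd_comm _ (vscal (-1) y)), vadd_opp, vadd_0. reflexivity. }
  rewrite H, vadd_comm, vadd_0 in E. symmetry; exact E.
Qed.

Ltac vexpand := unfold vsub in *;
  repeat rewrite ?inner_add_l, ?inner_add_r, ?inner_scal_l, ?inner_scal_r,
     ?inner_zero_l, ?inner_zero_r in *.
Ltac veq := apply eq_of_inner; vexpand; ring.

Definition rsum (f : nat -> R) (n : nat) : R := gsum 0 Rplus f n.

Lemma rsum_S f n : rsum f (S n) = rsum f n + f n.
Proof. reflexivity. Qed.
Lemma vsum_S {V : IPS} (f : nat -> V) n : vsum f (S n) = vadd (vsum f n) (f n).
Proof. reflexivity. Qed.
Lemma rsum_ext f g n : (forall i, (i < n)%nat -> f i = g i) -> rsum f n = rsum g n.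
Proof. induction n; intros H. reflexivity. rewrite !rsum_S, IHn, H; auto; intros; apply H; lia. Qed.
Lemma vsum_ext {V : IPS} (f g : nat -> V) n : (forall i, (i < n)%nat -> f i = g i) -> vsum f n = vsum g n.
Proof. induction n; intros H. reflexivity. rewrite !vsum_S, IHn, H; auto; intros; apply H; lia. Qed.
Lemma rsum_le f g n : (forall i, (i < n)%nat -> f i <= g i) -> rsum f n <= rsum g n.
Proof. induction n; intros H. unfold rsum; simpl; lra. rewrite !rsum_S. assert (f n <= g n) by (apply H; lia).
  assert (rsum f n <= rsum g n) by (apply IHn; intros; apply H; lia). unfold rsum in *; lra. Qed.
Lemma rsum_plus f g n : rsum (fun i => f i + g i) n = rsum f n + rsum g n.
Proof. induction n. unfold rsum; simpl; ring. rewrite !rsum_S, IHn; ring. Qed.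
Lemma rsum_scal a f n : rsum (fun i => a * f i) n = a * rsum f n.
Proof. induction n. unfold rsum; simpl; ring. rewrite !rsum_S, IHn; ring. Qed.
Lemma rsum_0 n : rsum (fun _ => 0) n = 0.
Proof. induction n. reflexivity. rewrite rsum_S, IHn; ring. Qed.
Lemma rsum_nonneg f n : (forall i, (i < n)%nat -> 0 <= f i) -> 0 <= rsum f n.
Proof. intros H. rewrite <- (rsum_0 n). apply rsum_le; auto. Qed.

Lemma inner_vsum_l {V : IPS} (f : nat -> V) n y : inner (vsum f n) y = rsum (fun i => inner (f i) y) n.
Proof. induction n. apply inner_zero_l. rewrite vsum_S, rsum_S, inner_add_l, IHn; reflexivity. Qed.
Lemma inner_vsum_r {V : IPS} (f : nat -> V) n y : inner y (vsum f n) = rsum (fun i => inner y (f i)) n.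
Proof. rewrite inner_sym, inner_vsum_l. apply rsum_ext; intros; apply inner_sym. Qed.

Lemma vsum_add {V : IPS} (f g : nat -> V) n : vsum (fun i => vadd (f i) (g i)) n = vadd (vsum f n) (vsum g n).
Proof. induction n. simpl. unfold vsum; simpl. rewrite vadd_0; reflexivity.
  rewrite !vsum_S, IHn. veq. Qed.
Lemma vsum_scal {V : IPS} a (f : nat -> V) n : vsum (fun i => vscal a (f i)) n = vscal a (vsum f n).
Proof. induction n. unfold vsum; simpl. veq. rewrite !vsum_S, IHn. veq. Qed.

Lemma norm_zero {V : IPS} (N : V -> R) : is_norm N -> N vzero = 0.
Proof. intros (H0&H1&H2&H3). assert (E : vscal 0 vzero = (vzero : V)) by veq.
  rewrite <- E, H2, Rabs_R0; ring. Qed.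
Lemma norm_opp {V : IPS} (N : V -> R) x : is_norm N -> N (vscal (-1) x) = N x.
Proof. intros (H0&H1&H2&H3). rewrite H2. replace (Rabs (-1)) with 1. ring. rewrite Rabs_left; lra. Qed.
Lemma norm_pos {V : IPS} (N : V -> R) x : is_norm N -> x <> vzero -> 0 < N x.
Proof. intros (H0&H1&H2&H3) Hx. destruct (H0 x); auto. exfalso; apply Hx; auto. Qed.
Lemma norm_sub_tri {V : IPS} (N : V -> R) x y z : is_norm N -> N (vsub x y) <= N (vsub x z) + N (vsub z y).
Proof. intros HN. assert (E : vsub x y = vadd (vsub x z) (vsub z y)) by veq.
  rewrite E. apply HN. Qed.
Lemma norm_vsum {V : IPS} (N : V -> R) f n : is_norm N -> N (vsum f n) <= rsum (fun i => N (f i)) n.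
Proof. intros HN. induction n. unfold vsum, rsum; simpl. rewrite norm_zero; auto; lra.
  rewrite vsum_S, rsum_S. eapply Rle_trans. apply HN. lra. Qed.

Lemma norm2_nonneg {V : IPS} (x : V) : 0 <= norm2 x.
Proof. apply sqrt_pos. Qed.


Lemma Rsup_spec E : bound E -> (exists x, E x) -> is_lub E (Rsup E).
Proof.
  intros Hb He. unfold Rsup. destruct excluded_middle_informative as [H|H].
  - destruct (completeness E (proj1 H) (proj2 H)) as [m Hm]; simpl; exact Hm.
  - exfalso; apply H; split; auto.
Qed.
Lemma Rsup_ub E x : bound E -> E x -> x <= Rsup E.
Proof. intros Hb Hx. apply (Rsup_spec E Hb (ex_intro _ x Hx)); auto. Qed.
Lemma Rsup_le E b : (exists x, E x) -> (forall x, E x -> x <= b) -> Rsup E <= b.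
Proof. intros He Hb. apply (Rsup_spec E (ex_intro _ b Hb) He). exact Hb. Qed.

Lemma Rinf_le E r : (forall s, E s -> 0 <= s) -> E r -> Rinf E <= r.
Proof.
  intros Hp Hr. unfold Rinf.
  assert (-r <= Rsup (fun s => E (-s))).
  { apply Rsup_ub. exists 0. intros s Hs. apply Hp in Hs. lra. rewrite Ropp_involutive; auto. }
  lra.
Qed.
Lemma Rinf_ge E b : (exists r, E r) -> (forall r, E r -> b <= r) -> b <= Rinf E.
Proof.
  intros [r Hr] Hb. unfold Rinf.
  assert (Rsup (fun s => E (-s)) <= -b).
  { apply Rsup_le. exists (-r). rewrite Ropp_involutive; auto.
    intros x Hx. apply Hb in Hx. lra. }
  lra.
Qed.

Lemma rmax_ge f n i : (i <= n)%nat -> f i <= rmax_upto f n.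
Proof.
  induction n; intros H; simpl.
  - replace i with O by lia. lra.
  - destruct (Nat.eq_dec i (S n)) as [->|Hne].
    + apply Rmax_r.
    + eapply Rle_trans. apply IHn; lia. apply Rmax_l.
Qed.
Lemma rmax_le f n B : (forall i, (i <= n)%nat -> f i <= B) -> rmax_upto f n <= B.
Proof.
  induction n; intros H; simpl. apply H; lia.
  apply Rmax_lub. apply IHn; intros; apply H; lia. apply H; lia.
Qed.
Lemma rmax_ext f g n : (forall i, (i <= n)%nat -> f i = g i) -> rmax_upto f n = rmax_upto g n.
Proof.
  induction n; intros H; simpl. apply H; lia.
  rewrite IHn by (intros; apply H; lia). rewrite H by lia. reflexivity.
Qed.
Lemma rmax_scal a f n : 0 <= a -> rmax_upto (fun i => a * f i) n = a * rmax_upto f n.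
Proof.
  intros Ha. induction n; simpl. reflexivity. rewrite IHn. apply RmaxRmult; auto.
Qed.
Lemma rmax_const c n f : (forall i, (i <= n)%nat -> f i = c) -> rmax_upto f n = c.
Proof.
  intros H. apply Rle_antisym. apply rmax_le; intros; rewrite H; auto; lra.
  rewrite <- (H O) by lia. apply rmax_ge; lia.
Qed.

Definition poshom {V : IPS} (f : V -> R) := forall a x, 0 <= a -> f (vscal a x) = a * f x.

Lemma poshom_zero {V : IPS} (f : V -> R) : poshom f -> f vzero = 0.
Proof. intros H. assert (E : vscal 0 vzero = (vzero : V)) by veq.
  rewrite <- E, H; lra. Qed.

Lemma subdiff_char {V : IPS} (f : V -> R) x0 g : poshom f ->
  (subdiff f x0 g <-> ((forall x, inner g x <= f x) /\ inner g x0 = f x0)).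
Proof.
  intros Hf. unfold subdiff. split.
  - intros H.
    assert (E1 : inner g x0 = f x0).
    { assert (H1 := H vzero). assert (H2 := H (vscal 2 x0)).
      rewrite poshom_zero in H1 by auto. rewrite Hf in H2 by lra.
      vexpand. lra. }
    split; auto. intros x. assert (H1 := H x). vexpand. lra.
  - intros [H1 H2] y. assert (H3 := H1 y). vexpand. lra.
Qed.

Lemma norm_poshom {V : IPS} (N : V -> R) : is_norm N -> poshom N.
Proof. intros HN a x Ha. destruct HN as (_&_&H&_). rewrite H, Rabs_right; lra. Qed.

Lemma inner_le_abs {V : IPS} (f : V -> R) (g : V) : poshom f -> (forall x, f (vscal (-1) x) = f x) ->
  (forall x, inner g x <= f x) -> forall x, Rabs (inner g x) <= f x.
Proof.
  intros Hp Hs H x. apply Rabs_le. split. 2: auto.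
  assert (H1 := H (vscal (-1) x)). rewrite Hs in H1. vexpand. lra.
Qed.


Definition orthonormal {V : IPS} (u : nat -> V) m :=
  forall i j, (i < m)%nat -> (j < m)%nat -> inner (u i) (u j) = if Nat.eqb i j then 1 else 0.
Definition proj {V : IPS} (u : nat -> V) m (v : V) := vsum (fun j => vscal (inner v (u j)) (u j)) m.

Lemma rsum_delta (c : nat -> R) m i : (i < m)%nat ->
  rsum (fun j => c j * (if Nat.eqb j i then 1 else 0)) m = c i.
Proof.
  induction m; intros H. lia. rewrite rsum_S.
  destruct (Nat.eq_dec i m) as [->|Hne].
  - rewrite Nat.eqb_refl. rewrite (rsum_ext _ (fun _ => 0)). rewrite rsum_0; ring.
    intros j Hj. destruct (Nat.eqb_spec j m); [lia|ring].
  - rewrite IHm by lia. destruct (Nat.eqb_spec m i); [lia|ring].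
Qed.

Lemma inner_proj_u {V : IPS} (u : nat -> V) m v i : orthonormal u m -> (i < m)%nat ->
  inner (proj u m v) (u i) = inner v (u i).
Proof.
  intros Ho Hi. unfold proj. rewrite inner_vsum_l.
  rewrite (rsum_ext _ (fun j => inner v (u j) * (if Nat.eqb j i then 1 else 0))).
  apply rsum_delta; auto. intros j Hj. rewrite inner_scal_l, Ho; auto.
Qed.

Lemma proj_add {V : IPS} (u : nat -> V) m a b : proj u m (vadd a b) = vadd (proj u m a) (proj u m b).
Proof. unfold proj. rewrite <- vsum_add. apply vsum_ext; intros. veq. Qed.
Lemma proj_scal {V : IPS} (u : nat -> V) m c a : proj u m (vscal c a) = vscal c (proj u m a).
Proof. unfold proj. rewrite <- vsum_scal. apply vsum_ext; intros. veq. Qed.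
Lemma proj_zero {V : IPS} (u : nat -> V) m : proj u m vzero = vzero.
Proof. assert (E : (vzero : V) = vscal 0 vzero) by veq. rewrite E, proj_scal. veq. Qed.

Lemma gs_step {V : IPS} (e : nat -> V) p :
  exists u m, orthonormal u m /\ forall i, (i < p)%nat -> proj u m (e i) = e i.
Proof.
  induction p.
  - exists (fun _ => vzero), O. split. intros i j Hi; lia. intros; lia.
  - destruct IHp as (u & m & Ho & Hp).
    set (r := vsub (e p) (proj u m (e p))).
    assert (Hr : forall j, (j < m)%nat -> inner r (u j) = 0).
    { intros j Hj. unfold r. unfold vsub. rewrite inner_add_l, inner_scal_l, inner_proj_u; auto. ring. }
    destruct (Req_dec (inner r r) 0) as [H0|H0].
    + exists u, m. split; auto. intros i Hi. destruct (Nat.eq_dec i p) as [->|Hne].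
      * symmetry. apply eq_of_inner. exact H0.
      * apply Hp; lia.
    + assert (Hpos : 0 < inner r r) by (destruct (inner_pos V r); lra).
      set (nr := sqrt (inner r r)).
      assert (Hnr : 0 < nr) by (apply sqrt_lt_R0; auto).
      assert (Hnr2 : nr * nr = inner r r) by (apply sqrt_sqrt; lra).
      set (w := vscal (/ nr) r).
      assert (Hw : inner w w = 1).
      { unfold w. rewrite inner_scal_l, inner_scal_r, <- Hnr2. field. lra. }
      assert (Hwu : forall j, (j < m)%nat -> inner (u j) w = 0).
      { intros j Hj. unfold w. rewrite inner_scal_r, inner_sym, Hr; auto; ring. }
      exists (fun j => if Nat.eqb j m then w else u j), (S m). split.
      * intros i j Hi Hj.
        destruct (Nat.eqb_spec i m), (Nat.eqb_spec j m); subst.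
        -- rewrite Nat.eqb_refl; auto.
        -- rewrite inner_sym, Hwu by lia. destruct (Nat.eqb_spec m j); [lia|auto].
        -- rewrite Hwu by lia. destruct (Nat.eqb_spec i m); [lia|auto].
        -- apply Ho; lia.
      * assert (Hpr : forall v, proj (fun j => if Nat.eqb j m then w else u j) (S m) v
                        = vadd (proj u m v) (vscal (inner v w) w)).
        { intros v. unfold proj. rewrite vsum_S, Nat.eqb_refl. f_equal.
          apply vsum_ext. intros j Hj. destruct (Nat.eqb_spec j m); [lia|auto]. }
        intros i Hi. rewrite Hpr. destruct (Nat.eq_dec i p) as [->|Hne].
        -- assert (E : inner (e p) w = nr).
           { assert (E1 : e p = vadd r (proj u m (e p))) by (unfold r; veq).
             unfold w. rewrite inner_scal_r. rewrite E1 at 1. rewrite inner_add_l.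
             unfold proj. rewrite inner_vsum_l.
             rewrite (rsum_ext _ (fun _ => 0)). rewrite rsum_0, <- Hnr2. field. lra.
             intros j Hj. rewrite inner_scal_l, (inner_sym _ (u j)), Hr; auto; ring. }
           rewrite E. unfold w. unfold r.
           apply eq_of_inner. vexpand. idtac.
           field; lra.
        -- rewrite Hp by lia.
           assert (E : inner (e i) w = 0).
           { rewrite <- (Hp i) by lia. unfold proj. rewrite inner_vsum_l.
             rewrite (rsum_ext _ (fun _ => 0)). apply rsum_0.
             intros j Hj. rewrite inner_scal_l, Hwu; auto; ring. }
           rewrite E. veq.
Qed.

Lemma onb_exists (V : IPS) : exists (u : nat -> V) m, orthonormal u m /\ forall v, proj u m v = v.
Proof.
  destruct (fin_dim V) as (n & e & He).
  destruct (gs_step e n) as (u & m & Ho & Hp).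
  exists u, m. split; auto. intros v. destruct (He v) as [c Hc]. rewrite Hc.
  change (proj u m (vsum (fun i => vscal (c i) (e i)) n) = vsum (fun i => vscal (c i) (e i)) n).
  assert (forall n', (n' <= n)%nat -> proj u m (vsum (fun i => vscal (c i) (e i)) n') = vsum (fun i => vscal (c i) (e i)) n').
  { induction n'; intros Hn. apply proj_zero.
    rewrite vsum_S, proj_add, proj_scal, IHn', Hp by lia. reflexivity. }
  apply H; lia.
Qed.

Definition linear_all {V : IPS} (f : V -> R) :=
  (forall x y, f (vadd x y) = f x + f y) /\ (forall a x, f (vscal a x) = a * f x).

Lemma lin_zero {V : IPS} (f : V -> R) : linear_all f -> f vzero = 0.
Proof. intros [_ H]. assert (E : (vzero : V) = vscal 0 vzero) by veq. rewrite E, H; ring. Qed.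
Lemma lin_vsum {V : IPS} (f : V -> R) h n : linear_all f -> f (vsum h n) = rsum (fun i => f (h i)) n.
Proof. intros Hf. induction n. apply lin_zero; auto. rewrite vsum_S, rsum_S, (proj1 Hf), IHn; auto. Qed.

Lemma riesz {V : IPS} (u : nat -> V) m (f : V -> R) : orthonormal u m -> (forall v, proj u m v = v) ->
  linear_all f -> exists g, forall x, f x = inner x g.
Proof.
  intros Ho Hf Hl. exists (vsum (fun j => vscal (f (u j)) (u j)) m). intros x.
  rewrite <- (Hf x) at 1. unfold proj. rewrite lin_vsum, inner_vsum_r; auto.
  apply rsum_ext. intros j Hj. rewrite (proj2 Hl), inner_scal_r. ring.
Qed.

Lemma riesz_explicit {V : IPS} (u : nat -> V) m (f : V -> R) : orthonormal u m -> (forall v, proj u m v = v) ->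
  linear_all f -> forall x, f x = inner x (vsum (fun j => vscal (f (u j)) (u j)) m).
Proof.
  intros Ho Hf Hl x.
  rewrite <- (Hf x) at 1. unfold proj. rewrite lin_vsum, inner_vsum_r; auto.
  apply rsum_ext. intros j Hj. rewrite (proj2 Hl), inner_scal_r. ring.
Qed.


Lemma inv_small eps : 0 < eps -> exists N0, forall n, (N0 <= n)%nat -> / (INR n + 1) < eps.
Proof.
  intros He. destruct (archimed_cor1 eps He) as (N & H1 & H2). exists N. intros n Hn.
  eapply Rle_lt_trans; [|exact H1]. apply Rlt_le. apply Rinv_lt_contravar.
  apply Rmult_lt_0_compat. apply lt_0_INR; lia. pose proof (pos_INR n); lra.
  apply le_INR in Hn. lra.
Qed.
Lemma cv_inv : Un_cv (fun n => / (INR n + 1)) 0.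
Proof.
  intros eps He. destruct (inv_small eps He) as [N0 H]. exists N0. intros n Hn.
  unfold R_dist. rewrite Rminus_0_r, Rabs_right. apply H; lia. left; apply RinvN_pos.
Qed.
Lemma le_of_cv (T : nat -> R) c : Un_cv T 0 -> (forall n, c <= T n) -> c <= 0.
Proof.
  intros Hc H. destruct (Rle_dec c 0) as [|Hn]; auto. exfalso.
  destruct (Hc c) as [N0 HN]. lra. specialize (HN N0 (le_n _)). specialize (H N0).
  unfold R_dist in HN. rewrite Rminus_0_r in HN. apply Rabs_def2 in HN. lra.
Qed.
Lemma cv_rsum (g : nat -> nat -> R) p : (forall i, (i < p)%nat -> Un_cv (fun n => g n i) 0) ->
  Un_cv (fun n => rsum (g n) p) 0.
Proof.
  induction p; intros H.
  - intros eps He. exists O. intros n _. unfold R_dist, rsum; simpl. rewrite Rminus_0_r, Rabs_R0; lra.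
  - replace 0 with (0 + 0) by ring. apply (CV_plus (fun n => rsum (g n) p) (fun n => g n p)).
    apply IHp; intros; apply H; lia. apply H; lia.
Qed.
Lemma Rabs_rsum f n : Rabs (rsum f n) <= rsum (fun i => Rabs (f i)) n.
Proof. induction n. unfold rsum; simpl; rewrite Rabs_R0; lra.
  rewrite !rsum_S. eapply Rle_trans. apply Rabs_triang. lra. Qed.

Definition Sv {V : IPS} (u : nat -> V) p (a : nat -> R) := vsum (fun i => vscal (a i) (u i)) p.

Lemma Sv_lin {V : IPS} (u : nat -> V) p al be a b :
  Sv u p (fun i => al * a i + be * b i) = vadd (vscal al (Sv u p a)) (vscal be (Sv u p b)).
Proof.
  unfold Sv. rewrite <- !vsum_scal, <- vsum_add. apply vsum_ext; intros. veq.
Qed.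

Lemma norm_Sv {V : IPS} (N : V -> R) u p a : is_norm N ->
  N (Sv u p a) <= rsum (fun i => Rabs (a i) * N (u i)) p.
Proof.
  intros HN. unfold Sv. eapply Rle_trans. apply norm_vsum; auto.
  apply rsum_le. intros i Hi. destruct HN as (_&_&H&_). rewrite H. lra.
Qed.

Lemma coord_bound {V : IPS} (N : V -> R) (u : nat -> V) m : is_norm N -> orthonormal u m ->
  forall p, (p <= m)%nat -> exists C, 0 <= C /\
    forall a j, (j < p)%nat -> Rabs (a j) <= C * N (Sv u p a).
Proof.
  intros HN Ho. induction p; intros Hpm.
  - exists 0. split. lra. intros; lia.
  - destruct IHp as (C & HC0 & HC). lia.
    assert (Hd : exists d, 0 < d /\ forall a, d <= N (vsub (u p) (Sv u p a))).
    { apply NNPP. intros Hneg.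
      assert (Hs : forall n, exists a, N (vsub (u p) (Sv u p a)) < / (INR n + 1)).
      { intros n. apply NNPP. intros H1. apply Hneg. exists (/ (INR n + 1)). split. apply RinvN_pos.
        intros a. apply Rnot_lt_le. intros H2. apply H1. exists a; auto. }
      set (A := fun n => proj1_sig (constructive_indefinite_description _ (Hs n))).
      assert (HA : forall n, N (vsub (u p) (Sv u p (A n))) < / (INR n + 1)).
      { intros n. unfold A. destruct constructive_indefinite_description; simpl; auto. }
      assert (Hcau : forall j, (j < p)%nat -> Cauchy_crit (fun n => A n j)).
      { intros j Hj eps He.
        destruct (inv_small (eps / (2 * (C + 1)))) as [N0 HN0].
        { apply Rdiv_lt_0_compat; lra. }
        exists N0. intros n l Hn Hl. unfold R_dist.
        assert (E := HC (fun i => 1 * A n i + (-1) * A l i) j Hj).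
        rewrite Sv_lin in E.
        assert (E2 : vadd (vscal 1 (Sv u p (A n))) (vscal (-1) (Sv u p (A l)))
           = vsub (Sv u p (A n)) (Sv u p (A l))) by veq.
        rewrite E2 in E.
        assert (E3 := norm_sub_tri N (Sv u p (A n)) (Sv u p (A l)) (u p) HN).
        assert (E4 : N (vsub (Sv u p (A n)) (u p)) = N (vsub (u p) (Sv u p (A n)))).
        { rewrite <- (norm_opp N (vsub (u p) (Sv u p (A n)))); auto. f_equal. veq. }
        specialize (HA n) as H5. specialize (HA l) as H6. specialize (HN0 n Hn) as H7.
        specialize (HN0 l Hl) as H8.
        replace (A n j - A l j) with (1 * A n j + -1 * A l j) by ring.
        eapply Rle_lt_trans. exact E.
        assert (N (vsub (Sv u p (A n)) (Sv u p (A l))) < 2 * (eps / (2 * (C + 1)))) by lra.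
        assert (C * N (vsub (Sv u p (A n)) (Sv u p (A l))) <= C * (2 * (eps / (2 * (C + 1))))).
        { apply Rmult_le_compat_l; lra. }
        assert (C * (2 * (eps / (2 * (C + 1)))) < eps).
        { replace (C * (2 * (eps / (2 * (C + 1))))) with (eps * (C / (C + 1))) by (field; lra).
          assert (C / (C + 1) < 1). { apply (Rmult_lt_reg_r (C+1)). lra. unfold Rdiv. rewrite Rmult_assoc, Rinv_l by lra. lra. }
          nra. }
        lra. }
      set (L := fun j => epsilon (inhabits 0) (fun l => Un_cv (fun n => A n j) l)).
      assert (HL : forall j, (j < p)%nat -> Un_cv (fun n => A n j) (L j)).
      { intros j Hj. unfold L. apply epsilon_spec.
        destruct (R_complete _ (Hcau j Hj)) as [l Hl]. exists l; auto. }
      assert (Hz : N (vsub (u p) (Sv u p L)) <= 0).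
      { apply (le_of_cv (fun n => / (INR n + 1) + rsum (fun i => Rabs (A n i - L i) * N (u i)) p)).
        - replace 0 with (0 + 0) by ring. apply CV_plus. apply cv_inv.
          apply (cv_rsum (fun n i => Rabs (A n i - L i) * N (u i))).
          intros i Hi. replace 0 with (Rabs (L i - L i) * N (u i)).
          apply (CV_mult (fun n => Rabs (A n i - L i)) (fun _ => N (u i))).
          apply cv_cvabs. apply CV_minus. apply HL; auto.
          intros e He; exists O; intros; unfold R_dist; rewrite Rminus_diag, Rabs_R0; lra.
          intros e He; exists O; intros; unfold R_dist; rewrite Rminus_diag, Rabs_R0; lra.
          rewrite Rminus_diag, Rabs_R0; ring.
        - intros n. eapply Rle_trans. apply (norm_sub_tri N _ _ (Sv u p (A n)) HN).
          assert (HA' := HA n).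
          assert (E : vsub (Sv u p (A n)) (Sv u p L) = Sv u p (fun i => 1 * A n i + (-1) * L i)).
          { rewrite Sv_lin. veq. }
          rewrite E. assert (E2 := norm_Sv N u p (fun i => 1 * A n i + -1 * L i) HN).
          assert (rsum (fun i => Rabs (1 * A n i + -1 * L i) * N (u i)) p =
                  rsum (fun i => Rabs (A n i - L i) * N (u i)) p).
          { apply rsum_ext; intros. f_equal. f_equal. ring. }
          lra. }
      assert (Hz2 : u p = Sv u p L).
      { destruct HN as (H0&H1&_). apply eq_of_inner. rewrite (H1 (vsub (u p) (Sv u p L))). apply inner_zero_l.
        specialize (H0 (vsub (u p) (Sv u p L))). lra. }
      assert (H11 := Ho p p ltac:(lia) ltac:(lia)). rewrite Nat.eqb_refl in H11.
      rewrite Hz2 in H11 at 1. unfold Sv in H11. rewrite inner_vsum_l in H11.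
      rewrite (rsum_ext _ (fun _ => 0)) in H11. rewrite rsum_0 in H11. lra.
      intros i Hi. rewrite inner_scal_l, Ho by lia. destruct (Nat.eqb_spec i p); [lia|ring]. }
    destruct Hd as (d & Hd0 & Hd).
    exists (Rmax (/ d) (C * (1 + N (u p) / d))). split.
    { eapply Rle_trans; [|apply Rmax_l]. left; apply Rinv_0_lt_compat; auto. }
    intros a j Hj.
    assert (Hx : Sv u (S p) a = vadd (Sv u p a) (vscal (a p) (u p))) by reflexivity.
    assert (Hap : Rabs (a p) * d <= N (Sv u (S p) a)).
    { destruct (Req_dec (a p) 0) as [E|E].
      - rewrite E, Rabs_R0. destruct HN as (H0&_). rewrite Rmult_0_l; auto.
      - assert (E2 : Sv u (S p) a = vscal (a p) (vsub (u p) (Sv u p (fun i => (- / a p) * a i + 0 * a i)))).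
        { rewrite Sv_lin, Hx. apply eq_of_inner. vexpand. field. auto. }
        rewrite E2. destruct HN as (_&_&H2&_). rewrite H2.
        apply Rmult_le_compat_l. apply Rabs_pos. apply Hd. }
    assert (Hap2 : Rabs (a p) <= / d * N (Sv u (S p) a)).
    { apply (Rmult_le_reg_r d). auto. replace (/ d * N (Sv u (S p) a) * d) with (N (Sv u (S p) a)) by (field; lra). lra. }
    assert (HNx : 0 <= N (Sv u (S p) a)) by apply HN.
    assert (HNu : 0 <= N (u p)) by apply HN.
    destruct (Nat.eq_dec j p) as [->|Hne].
    + eapply Rle_trans. exact Hap2. apply Rmult_le_compat_r; auto. apply Rmax_l.
    + assert (Hj' : (j < p)%nat) by lia.
      assert (E1 : Sv u p a = vadd (Sv u (S p) a) (vscal (- a p) (u p))).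
      { rewrite Hx. veq. }
      assert (E2 : N (Sv u p a) <= N (Sv u (S p) a) + Rabs (a p) * N (u p)).
      { rewrite E1. eapply Rle_trans. apply HN. destruct HN as (_&_&H2&_). rewrite H2, Rabs_Ropp. lra. }
      eapply Rle_trans. apply HC; auto.
      eapply Rle_trans. apply Rmult_le_compat_l. auto. exact E2.
      eapply Rle_trans with (C * (1 + N (u p) / d) * N (Sv u (S p) a)).
      * assert (Rabs (a p) * N (u p) <= / d * N (Sv u (S p) a) * N (u p)).
        { apply Rmult_le_compat_r; auto. }
        replace (C * (1 + N (u p) / d) * N (Sv u (S p) a)) with
          (C * (N (Sv u (S p) a) + / d * N (Sv u (S p) a) * N (u p))) by (field; lra).
        apply Rmult_le_compat_l; auto. lra.
      * apply Rmult_le_compat_r; auto. apply Rmax_r.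
Qed.

Lemma functional_bounded {V : IPS} (N : V -> R) (u : nat -> V) m y : is_norm N -> orthonormal u m ->
  (forall v, proj u m v = v) -> exists B, forall x, Rabs (inner x y) <= B * N x.
Proof.
  intros HN Ho Hf. destruct (coord_bound N u m HN Ho m (le_n _)) as (C & HC0 & HC).
  exists (C * rsum (fun j => Rabs (inner (u j) y)) m). intros x.
  rewrite <- (Hf x) at 1. unfold proj. rewrite inner_vsum_l.
  eapply Rle_trans. apply Rabs_rsum.
  replace (C * rsum (fun j => Rabs (inner (u j) y)) m * N x) with
    (rsum (fun j => (C * N x) * Rabs (inner (u j) y)) m) by (rewrite rsum_scal; ring).
  apply rsum_le. intros j Hj. rewrite inner_scal_l, Rabs_mult.
  apply Rmult_le_compat_r. apply Rabs_pos.
  rewrite <- (Hf x) at 2. apply (HC (fun j => inner x (u j))); auto.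
Qed.

Lemma dual_norm_spec {V : IPS} (N : V -> R) y B (x0 : V) : is_norm N -> x0 <> vzero ->
  (forall x, Rabs (inner x y) <= B * N x) -> forall x, Rabs (inner x y) <= dual_norm N y * N x.
Proof.
  intros HN Hx0 HB x. destruct (Req_dec (N x) 0) as [E|E].
  - destruct HN as (_&H1&_). rewrite E. rewrite (H1 x E), inner_zero_l, Rabs_R0. lra.
  - assert (Hp : 0 < N x) by (destruct HN as (H0&_); destruct (H0 x); lra).
    set (x' := vscal (/ N x) x).
    assert (Hx' : N x' = 1).
    { unfold x'. destruct HN as (_&_&H2&_). rewrite H2, Rabs_right. field; lra.
      left; apply Rinv_0_lt_compat; auto. }
    assert (Hle : Rabs (inner x' y) <= dual_norm N y).
    { unfold dual_norm. apply Rsup_ub. exists B. intros r (z & Hz & ->).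
      specialize (HB z). rewrite Hz in HB. lra. exists x'; auto. }
    unfold x' in Hle. rewrite inner_scal_l, Rabs_mult, Rabs_right in Hle.
    2: left; apply Rinv_0_lt_compat; auto.
    apply (Rmult_le_compat_r (N x)) in Hle; [|lra].
    replace (/ N x * Rabs (inner x y) * N x) with (Rabs (inner x y)) in Hle by (field; lra). exact Hle.
Qed.

Lemma dual_norm_le {V : IPS} (N : V -> R) y c (x0 : V) : is_norm N -> x0 <> vzero ->
  (forall x, Rabs (inner x y) <= c * N x) -> dual_norm N y <= c.
Proof.
  intros HN Hx0 H. unfold dual_norm. apply Rsup_le.
  - assert (Hp := norm_pos N x0 HN Hx0). exists (Rabs (inner (vscal (/ N x0) x0) y)).
    exists (vscal (/ N x0) x0). split; auto. destruct HN as (_&_&H2&_). rewrite H2, Rabs_right. field; lra.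
    left; apply Rinv_0_lt_compat; auto.
  - intros r (x & Hx & ->). specialize (H x). rewrite Hx in H. lra.
Qed.


Definition ezero {V : IPS} : nat -> V := fun _ => vzero.
Definition eadd {V : IPS} (x y : nat -> V) : nat -> V := fun p => vadd (x p) (y p).
Definition escal {V : IPS} (a : R) (x : nat -> V) : nat -> V := fun p => vscal a (x p).

Ltac eeq := apply functional_extensionality; intro; unfold eadd, escal, ezero;
  apply eq_of_inner; vexpand; (ring || (field; auto)).

Definition subspace {V : IPS} (W : (nat -> V) -> Prop) :=
  W ezero /\ (forall x y, W x -> W y -> W (eadd x y)) /\ (forall a x, W x -> W (escal a x)).
Definition linear_on {V : IPS} (W : (nat -> V) -> Prop) (F : (nat -> V) -> R) :=
  (forall x y, W x -> W y -> F (eadd x y) = F x + F y) /\ (forall a x, W x -> F (escal a x) = a * F x).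
Definition sublin {V : IPS} (q : (nat -> V) -> R) :=
  (forall x y, q (eadd x y) <= q x + q y) /\ (forall a x, 0 <= a -> q (escal a x) = a * q x).

Lemma decomp_unique {V : IPS} (W : (nat -> V) -> Prop) v w1 w2 t1 t2 : subspace W -> ~ W v -> W w1 -> W w2 ->
  eadd w1 (escal t1 v) = eadd w2 (escal t2 v) -> t1 = t2 /\ w1 = w2.
Proof.
  intros (HW0 & HWa & HWs) Hv H1 H2 H.
  assert (Ht : t1 = t2).
  { apply NNPP; intros Hne. apply Hv.
    set (Z := eadd (eadd w1 (escal t1 v)) (escal (-1) (eadd w2 (escal t2 v)))).
    assert (HZ : Z = ezero). { unfold Z. rewrite H. eeq. }
    assert (Ev : v = escal (/ (t1 - t2)) (eadd Z (escal (-1) (eadd w1 (escal (-1) w2))))).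
    { unfold Z. apply functional_extensionality; intro; unfold eadd, escal, ezero.
      apply eq_of_inner; vexpand. field. lra. }
    rewrite Ev, HZ. repeat (assumption || apply HWs || apply HWa). }
  split; auto. subst t2.
  assert (E : w1 = eadd (eadd w1 (escal t1 v)) (escal (- t1) v)) by eeq.
  rewrite E, H. eeq.
Qed.

Definition ext_F {V : IPS} (W : (nat -> V) -> Prop) v (F : (nat -> V) -> R) c (z : nat -> V) : R :=
  match excluded_middle_informative (exists w t, W w /\ z = eadd w (escal t v)) with
  | left H => let (w, Hw) := constructive_indefinite_description _ H in
              let (t, Ht) := constructive_indefinite_description _ Hw in F w + t * c
  | right _ => 0
  end.

Lemma ext_F_eq {V : IPS} (W : (nat -> V) -> Prop) v F c w t : subspace W -> ~ W v -> W w ->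
  ext_F W v F c (eadd w (escal t v)) = F w + t * c.
Proof.
  intros HS Hv Hw. unfold ext_F. destruct excluded_middle_informative as [H|H].
  - destruct constructive_indefinite_description as [w' Hw'].
    destruct constructive_indefinite_description as [t' [Hw'' Ht']].
    destruct (decomp_unique W v w w' t t' HS Hv Hw Hw'' Ht') as [-> ->]. reflexivity.
  - exfalso. apply H. exists w, t. auto.
Qed.

Lemma sublin_zero {V : IPS} (q : (nat -> V) -> R) : sublin q -> q ezero = 0.
Proof. intros [_ H]. assert (E : (ezero : nat -> V) = escal 0 ezero) by eeq. rewrite E, H; lra. Qed.
Lemma lin_on_zero {V : IPS} W (F : (nat -> V) -> R) : subspace W -> linear_on W F -> F ezero = 0.
Proof. intros HS [_ H]. assert (E : (ezero : nat -> V) = escal 0 ezero) by eeq. rewrite E, H; [lra|apply HS]. Qed.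

Lemma hb_step {V : IPS} (q : (nat -> V) -> R) W F v : sublin q -> subspace W -> linear_on W F ->
  (forall x, W x -> F x <= q x) ->
  exists W' F', subspace W' /\ (forall x, W x -> W' x) /\ W' v /\ linear_on W' F' /\
     (forall x, W x -> F' x = F x) /\ (forall x, W' x -> F' x <= q x).
Proof.
  intros Hq HS HF Hd.
  destruct (classic (W v)) as [Hv|Hv].
  { exists W, F. refine (conj HS (conj _ (conj Hv (conj HF (conj _ Hd))))); auto. }
  destruct HS as (HW0 & HWa & HWs).
  assert (Hkey : forall w1 w2, W w1 -> W w2 ->
    F w1 - q (eadd w1 (escal (-1) v)) <= q (eadd w2 v) - F w2).
  { intros w1 w2 H1 H2.
    assert (E : eadd w1 w2 = eadd (eadd w1 (escal (-1) v)) (eadd w2 v)) by eeq.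
    assert (A1 := Hd _ (HWa _ _ H1 H2)). rewrite (proj1 HF) in A1 by auto.
    rewrite E in A1. assert (A2 := proj1 Hq (eadd w1 (escal (-1) v)) (eadd w2 v)). lra. }
  set (A := fun a => exists w, W w /\ a = F w - q (eadd w (escal (-1) v))).
  set (c := Rsup A).
  assert (HAne : exists a, A a).
  { exists (F ezero - q (eadd ezero (escal (-1) v))). exists ezero; auto. }
  assert (Hc1 : forall w, W w -> F w - q (eadd w (escal (-1) v)) <= c).
  { intros w Hw. apply Rsup_ub. exists (q (eadd ezero v) - F ezero).
    intros a (w' & Hw' & ->). apply Hkey; auto. exists w; auto. }
  assert (Hc2 : forall w, W w -> c <= q (eadd w v) - F w).
  { intros w Hw. apply Rsup_le; auto. intros a (w' & Hw' & ->). apply Hkey; auto. }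
  set (W' := fun z => exists w t, W w /\ z = eadd w (escal t v)).
  assert (HS : subspace W) by (repeat split; auto).
  exists W', (ext_F W v F c).
  assert (Hlin0 := HF).
  repeat split.
  - exists ezero, 0. split; auto. eeq.
  - intros x y (w1 & t1 & H1 & ->) (w2 & t2 & H2 & ->). exists (eadd w1 w2), (t1 + t2).
    split; auto. eeq.
  - intros a x (w1 & t1 & H1 & ->). exists (escal a w1), (a * t1). split; auto. eeq.
  - intros x Hx. exists x, 0. split; auto. eeq.
  - exists ezero, 1. split; auto. eeq.
  - intros x y (w1 & t1 & H1 & ->) (w2 & t2 & H2 & ->).
    assert (E : eadd (eadd w1 (escal t1 v)) (eadd w2 (escal t2 v)) = eadd (eadd w1 w2) (escal (t1 + t2) v)) by eeq.
    rewrite E, !ext_F_eq by auto. rewrite (proj1 HF) by auto. ring.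
  - intros a x (w1 & t1 & H1 & ->).
    assert (E : escal a (eadd w1 (escal t1 v)) = eadd (escal a w1) (escal (a * t1) v)) by eeq.
    rewrite E, !ext_F_eq by auto. rewrite (proj2 HF) by auto. ring.
  - intros x Hx. assert (E : x = eadd x (escal 0 v)) by eeq. rewrite E at 1.
    rewrite ext_F_eq by auto. ring.
  - intros z (w & t & Hw & ->). rewrite ext_F_eq by auto.
    destruct (Rtotal_order t 0) as [Ht|[Ht|Ht]].
    + set (s := - t). assert (Hs : 0 < s) by (unfold s; lra).
      assert (H1 := Hc1 (escal (/ s) w) (HWs _ _ Hw)).
      rewrite (proj2 HF) in H1 by auto.
      assert (E : eadd w (escal t v) = escal s (eadd (escal (/ s) w) (escal (-1) v))).
      { unfold s. apply functional_extensionality; intro; unfold eadd, escal.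
        apply eq_of_inner; vexpand. field. lra. }
      rewrite E, (proj2 Hq) by lra.
      apply (Rmult_le_compat_l s) in H1; [|lra].
      replace (s * (/ s * F w - q (eadd (escal (/ s) w) (escal (-1) v)))) with
        (F w - s * q (eadd (escal (/ s) w) (escal (-1) v))) in H1 by (field; lra).
      unfold s in *. lra.
    + subst t. assert (E : eadd w (escal 0 v) = w) by eeq. rewrite E. rewrite Rmult_0_l, Rplus_0_r. auto.
    + assert (H1 := Hc2 (escal (/ t) w) (HWs _ _ Hw)).
      rewrite (proj2 HF) in H1 by auto.
      assert (E : eadd w (escal t v) = escal t (eadd (escal (/ t) w) v)).
      { apply functional_extensionality; intro; unfold eadd, escal.
        apply eq_of_inner; vexpand. field. lra. }
      rewrite E, (proj2 Hq) by lra.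
      apply (Rmult_le_compat_l t) in H1; [|lra].
      replace (t * (q (eadd (escal (/ t) w) v) - / t * F w)) with
        (t * q (eadd (escal (/ t) w) v) - F w) in H1 by (field; lra).
      lra.
Qed.

Lemma hb_list {V : IPS} (q : (nat -> V) -> R) (l : list (nat -> V)) : forall W F, sublin q -> subspace W -> linear_on W F ->
  (forall x, W x -> F x <= q x) ->
  exists W' F', subspace W' /\ (forall x, W x -> W' x) /\ (forall v, In v l -> W' v) /\ linear_on W' F' /\
     (forall x, W x -> F' x = F x) /\ (forall x, W' x -> F' x <= q x).
Proof.
  induction l as [|v l IH]; intros W F Hq HS HF Hd.
  - exists W, F. refine (conj HS (conj _ (conj _ (conj HF (conj _ Hd))))); auto. intros v [].
  - destruct (hb_step q W F v Hq HS HF Hd) as (W1 & F1 & HS1 & Hinc1 & Hv1 & HF1 & Heq1 & Hd1).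
    destruct (IH W1 F1 Hq HS1 HF1 Hd1) as (W2 & F2 & HS2 & Hinc2 & Hl2 & HF2 & Heq2 & Hd2).
    exists W2, F2. refine (conj HS2 (conj _ (conj _ (conj HF2 (conj _ Hd2))))); auto.
    + intros v' [<-|Hin]; auto.
    + intros x Hx. rewrite Heq2, Heq1; auto.
Qed.


Definition iota {V : IPS} (i : nat) (x : V) : nat -> V := fun p => if Nat.eqb p i then x else vzero.
Definition delta {V : IPS} (n : nat) (x : V) : nat -> V := fun p => if Nat.ltb p n then x else vzero.

Ltac destr_ifs := repeat match goal with |- context [if ?b then _ else _] => destruct b end.
Ltac eeq2 := apply functional_extensionality; intro; unfold eadd, escal, ezero, iota, delta;
  destr_ifs; apply eq_of_inner; vexpand; (ring || (field; auto)).

Lemma iota_add {V : IPS} i (x y : V) : iota i (vadd x y) = eadd (iota i x) (iota i y).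
Proof. eeq2. Qed.
Lemma iota_scal {V : IPS} i a (x : V) : iota i (vscal a x) = escal a (iota i x).
Proof. eeq2. Qed.
Lemma iota_zero {V : IPS} i : iota i (vzero : V) = ezero.
Proof. eeq2. Qed.

Lemma subspace_all_iota {V : IPS} (W : (nat -> V) -> Prop) (u : nat -> V) m i :
  subspace W -> (forall v, proj u m v = v) -> (forall j, (j < m)%nat -> W (iota i (u j))) ->
  forall x, W (iota i x).
Proof.
  intros (H0 & Ha & Hs) Hf Hu x. rewrite <- (Hf x). unfold proj.
  assert (forall p, (p <= m)%nat -> W (iota i (vsum (fun j => vscal (inner x (u j)) (u j)) p))).
  { induction p; intros Hp. change (W (iota i vzero)). rewrite iota_zero; auto.
    rewrite vsum_S, iota_add, iota_scal. apply Ha. apply IHp; lia. apply Hs, Hu; lia. }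
  apply H; lia.
Qed.

Lemma subgrad_exists {V : IPS} (N : V -> R) (x0 : V) : is_norm N -> x0 <> vzero ->
  exists h, (forall x, inner h x <= N x) /\ inner h x0 = N x0.
Proof.
  intros HN Hx0. destruct (onb_exists V) as (u & m & Ho & Hf).
  set (q := fun z : nat -> V => N (z O)).
  assert (Hq : sublin q).
  { split. intros x y; unfold q, eadd; apply HN. intros a x Ha; unfold q, escal. apply norm_poshom; auto. }
  assert (Hxx : 0 < inner x0 x0).
  { destruct (inner_pos V x0); auto. exfalso; apply Hx0, inner_def; auto. }
  set (W := fun z : nat -> V => exists t, z = iota 0 (vscal t x0)).
  set (F := fun z : nat -> V => inner (z O) x0 / inner x0 x0 * N x0).
  assert (HS : subspace W).
  { split. exists 0. eeq2. split.
    intros x y (t1 & ->) (t2 & ->). exists (t1 + t2). eeq2.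
    intros a x (t & ->). exists (a * t). eeq2. }
  assert (HF : linear_on W F).
  { split; intros; unfold F, eadd, escal; vexpand; field; lra. }
  assert (Hd : forall x, W x -> F x <= q x).
  { intros x (t & ->). assert (Hp := norm_pos N x0 HN Hx0). unfold F, q, iota. simpl. rewrite inner_scal_l.
    destruct HN as (_&_&H2&_). rewrite H2. replace (t * inner x0 x0 / inner x0 x0 * N x0) with (t * N x0) by (field; lra).
    apply Rmult_le_compat_r. lra.
    apply Rle_abs. }
  destruct (hb_list q (map (fun j => iota 0 (u j)) (seq 0 m)) W F Hq HS HF Hd)
    as (W' & F' & HS' & Hinc & Hl & HF' & Heq & Hd').
  assert (HW'all : forall x, W' (iota 0 x)).
  { apply (subspace_all_iota W' u m 0 HS' Hf). intros j Hj. apply Hl. apply (in_map (fun j => iota 0 (u j))). apply in_seq. lia. }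
  set (f := fun x => F' (iota 0 x)).
  assert (Hfl : linear_all f).
  { split; intros; unfold f. rewrite iota_add. apply HF'; auto. rewrite iota_scal. apply HF'; auto. }
  exists (vsum (fun j => vscal (f (u j)) (u j)) m). split.
  - intros x. rewrite inner_sym, <- (riesz_explicit u m f Ho Hf Hfl). unfold f.
    eapply Rle_trans. apply Hd'; auto. unfold q, iota. simpl. lra.
  - rewrite inner_sym, <- (riesz_explicit u m f Ho Hf Hfl). unfold f.
    assert (E : iota 0 x0 = iota 0 (vscal 1 x0)) by (rewrite vscal_1; auto).
    rewrite E, Heq. unfold F, iota; simpl. rewrite inner_scal_l. field; lra. exists 1; auto.
Qed.

Lemma rmax_spike f n i c : (i <= n)%nat -> f i = c -> 0 <= c -> (forall p, (p <= n)%nat -> p <> i -> f p = 0) ->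
  rmax_upto f n = c.
Proof.
  intros Hi Hc H0 H. apply Rle_antisym.
  - apply rmax_le. intros p Hp. destruct (Nat.eq_dec p i) as [->|Hne]. lra. rewrite H; auto.
  - rewrite <- Hc. apply rmax_ge; auto.
Qed.

Lemma delta_0 {V : IPS} (x : V) : delta 0 x = ezero.
Proof. apply functional_extensionality; intro p. unfold delta, ezero. destruct (Nat.ltb_spec p 0); [lia|auto]. Qed.
Lemma delta_S {V : IPS} n (x : V) : delta (S n) x = eadd (delta n x) (iota n x).
Proof. apply functional_extensionality; intro p. unfold delta, eadd, iota.
  destruct (Nat.ltb_spec p (S n)), (Nat.ltb_spec p n), (Nat.eqb_spec p n); try lia; veq. Qed.

Lemma decomp {V : IPS} (k : nat) (N : nat -> V -> R) (mu : nat -> R) (x0 g : V) :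
  (1 <= k)%nat -> (forall i, (i < k)%nat -> is_norm (N i)) -> x0 <> vzero ->
  (forall i, (i < k)%nat -> 0 < mu i /\ mu i * N i x0 = 1) ->
  (forall x, inner g x <= max_norm k mu N x) -> inner g x0 = 1 ->
  exists (gs : nat -> V) (lam : nat -> R),
    (forall i, (i < k)%nat -> 0 <= lam i /\ (forall x, inner (gs i) x <= lam i * (mu i * N i x)) /\
                              inner (gs i) x0 = lam i) /\ vsum gs k = g.
Proof.
  intros Hk HN Hx0 Hmu Hg Hg0.
  destruct (onb_exists V) as (u & m & Ho & Hf).
  set (q := fun z : nat -> V => rmax_upto (fun i => mu i * N i (z i)) (k - 1)).
  assert (Hq : sublin q).
  { split.
    - intros x y. unfold q. apply rmax_le. intros i Hi.
      assert (Hi' : (i < k)%nat) by lia. destruct (Hmu i Hi') as [Hm _].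
      unfold eadd. eapply Rle_trans. apply Rmult_le_compat_l. lra. apply (HN i Hi').
      rewrite Rmult_plus_distr_l. apply Rplus_le_compat.
      apply (rmax_ge (fun i => mu i * N i (x i))); auto.
      apply (rmax_ge (fun i => mu i * N i (y i))); auto.
    - intros a x Ha. unfold q, escal. rewrite <- rmax_scal by auto. apply rmax_ext.
      intros i Hi. rewrite norm_poshom; auto. ring. apply HN; lia. }
  set (W := fun z : nat -> V => exists x, z = delta k x).
  set (F := fun z : nat -> V => inner (z O) g).
  assert (Hd0 : forall x : V, delta k x O = x).
  { intros x. unfold delta. destruct (Nat.ltb_spec 0 k); [auto|lia]. }
  assert (HS : subspace W).
  { split. exists vzero. apply functional_extensionality; intro p; unfold delta, ezero; destr_ifs; auto.
    split. intros x y (x1 & ->) (x2 & ->). exists (vadd x1 x2).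
    apply functional_extensionality; intro p; unfold delta, eadd; destr_ifs; auto; veq.
    intros a x (x1 & ->). exists (vscal a x1).
    apply functional_extensionality; intro p; unfold delta, escal; destr_ifs; auto; veq. }
  assert (HF : linear_on W F).
  { split; intros; unfold F, eadd, escal; vexpand; ring. }
  assert (HqD : forall x, q (delta k x) = max_norm k mu N x).
  { intros x. unfold q, max_norm. apply rmax_ext. intros i Hi. unfold delta.
    destruct (Nat.ltb_spec i k); [auto|lia]. }
  assert (Hd : forall x, W x -> F x <= q x).
  { intros z (x & ->). unfold F. rewrite Hd0, HqD, inner_sym. apply Hg. }
  set (l := flat_map (fun i => map (fun j => iota i (u j)) (seq 0 m)) (seq 0 k)).
  destruct (hb_list q l W F Hq HS HF Hd) as (W' & F' & HS' & Hinc & Hl & HF' & Heq & Hd').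
  assert (HW'all : forall i, (i < k)%nat -> forall x, W' (iota i x)).
  { intros i Hi. apply (subspace_all_iota W' u m i HS' Hf). intros j Hj. apply Hl.
    unfold l. apply in_flat_map. exists i. split. apply in_seq; lia.
    apply (in_map (fun j => iota i (u j))). apply in_seq. lia. }
  set (f := fun i x => F' (iota i x)).
  assert (Hfl : forall i, (i < k)%nat -> linear_all (f i)).
  { intros i Hi. split; intros; unfold f. rewrite iota_add. apply HF'; auto. rewrite iota_scal. apply HF'; auto. }
  assert (H1 : forall n, (n <= k)%nat -> forall x, W' (delta n x) /\ F' (delta n x) = rsum (fun i => f i x) n).
  { induction n; intros Hn x.
    - rewrite delta_0. split. apply HS'. rewrite (lin_on_zero W' F'); auto.
    - rewrite delta_S. destruct (IHn ltac:(lia) x) as [A B]. split.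
      apply HS'; [exact A| apply HW'all; lia].
      rewrite (proj1 HF'); [| exact A | apply HW'all; lia]. rewrite B, rsum_S. reflexivity. }
  assert (HFk : forall x, rsum (fun i => f i x) k = inner x g).
  { intros x. destruct (H1 k (le_n _) x) as [A B]. rewrite <- B, Heq. unfold F. rewrite Hd0; auto.
    exists x; auto. }
  assert (H2 : forall i, (i < k)%nat -> forall x, f i x <= mu i * N i x).
  { intros i Hi x. assert (A := Hd' (iota i x) (HW'all i Hi x)). unfold f.
    eapply Rle_trans. exact A. unfold q.
    right. apply (rmax_spike _ _ i). lia. unfold iota. rewrite Nat.eqb_refl. auto.
    destruct (Hmu i Hi). apply Rmult_le_pos. lra. apply HN; auto.
    intros p Hp Hne. unfold iota. destruct (Nat.eqb_spec p i); [lia|]. rewrite norm_zero. ring. apply HN; lia. }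
  assert (H3 : forall j, (j < k)%nat -> forall x, mu j * N j x <= 1 -> f j x <= f j x0).
  { intros j Hj x Hx.
    set (z := eadd (delta k x0) (iota j (vsub x x0))).
    assert (Wz : W' z). { apply HS'. apply (H1 k (le_n _)). apply HW'all; auto. }
    assert (Fz : F' z = 1 + f j x - f j x0).
    { unfold z. rewrite (proj1 HF'). 2: apply (H1 k (le_n _)). 2: apply HW'all; auto.
      rewrite Heq. 2: exists x0; auto. unfold F. rewrite Hd0, inner_sym, Hg0.
      change (F' (iota j (vsub x x0))) with (f j (vsub x x0)). unfold vsub.
      rewrite (proj1 (Hfl j Hj)), (proj2 (Hfl j Hj)). ring. }
    assert (qz : q z <= 1).
    { unfold q. apply rmax_le. intros p Hp. unfold z, eadd, delta, iota.
      destruct (Nat.ltb_spec p k); [|lia]. destruct (Nat.eqb_spec p j) as [->|Hne].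
      - assert (E : vadd x0 (vsub x x0) = x) by veq. rewrite E; auto.
      - rewrite vadd_0. right. apply Hmu. lia. }
    assert (Hdz := Hd' z Wz). lra. }
  set (lam := fun j => f j x0).
  assert (H4 : forall j, (j < k)%nat -> forall x, f j x <= lam j * (mu j * N j x)).
  { intros j Hj x. destruct (Hmu j Hj) as [Hm Hm1].
    destruct (Req_dec (N j x) 0) as [E|E].
    - destruct (HN j Hj) as (_&Hdef&_). rewrite (Hdef x E), lin_zero, norm_zero; auto. lra.
    - assert (Hp : 0 < N j x) by (destruct (HN j Hj) as (H0&_); destruct (H0 x); lra).
      set (s := mu j * N j x). assert (Hs : 0 < s) by (apply Rmult_lt_0_compat; auto).
      assert (A := H3 j Hj (vscal (/ s) x)).
      rewrite (proj2 (Hfl j Hj)) in A. rewrite norm_poshom in A. 2: apply HN; auto.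
      2: left; apply Rinv_0_lt_compat; auto.
      replace (mu j * (/ s * N j x)) with 1 in A by (unfold s; field; lra).
      specialize (A (Rle_refl _)). apply (Rmult_le_compat_l s) in A; [|lra].
      replace (s * (/ s * f j x)) with (f j x) in A by (field; lra). unfold lam. lra. }
  exists (fun j => vsum (fun l => vscal (f j (u l)) (u l)) m), lam.
  assert (Hr : forall j, (j < k)%nat -> forall x, inner (vsum (fun l => vscal (f j (u l)) (u l)) m) x = f j x).
  { intros j Hj x. rewrite inner_sym, <- (riesz_explicit u m (f j) Ho Hf (Hfl j Hj)). auto. }
  split.
  - intros i Hi. split; [|split].
    + assert (A := H4 i Hi (vscal (-1) x0)). rewrite (proj2 (Hfl i Hi)), norm_opp in A by (apply HN; auto).
      destruct (Hmu i Hi) as [_ Hm1]. rewrite Hm1 in A. unfold lam in *. lra.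
    + intros x. rewrite Hr; auto.
    + rewrite Hr; auto.
  - apply eq_of_inner.
    set (d := vsub (vsum (fun j => vsum (fun l => vscal (f j (u l)) (u l)) m) k) g).
    unfold d at 1. unfold vsub. rewrite inner_add_l, inner_scal_l, inner_vsum_l.
    rewrite (rsum_ext _ (fun i => f i d)). rewrite HFk, inner_sym. ring.
    intros i Hi. apply Hr; auto.
Qed.


Lemma choice_k {A : Type} (a0 : A) (P : nat -> A -> Prop) k :
  (forall i, (i < k)%nat -> exists a, P i a) -> exists f, forall i, (i < k)%nat -> P i (f i).
Proof.
  intros H. exists (fun i => epsilon (inhabits a0) (fun a => (i < k)%nat -> P i a)).
  intros i Hi. apply (epsilon_spec (inhabits a0) (fun a => (i < k)%nat -> P i a)); auto.
  destruct (H i Hi) as [a Ha]. exists a; auto.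
Qed.

Lemma sqrt_sum_le r e : 0 <= r -> 0 <= e -> sqrt (r * r + e * e) <= r + e.
Proof.
  intros Hr He. rewrite <- (sqrt_square (r + e)) by lra. apply sqrt_le_1.
  nra. nra. nra.
Qed.

Lemma rsum_pos f n : (0 < n)%nat -> (forall i, (i < n)%nat -> 0 < f i) -> 0 < rsum f n.
Proof.
  intros Hn H. destruct n. lia. rewrite rsum_S.
  assert (0 <= rsum f n) by (apply rsum_nonneg; intros; left; apply H; lia).
  assert (0 < f n) by (apply H; lia). lra.
Qed.

Theorem mainTheorem9 (V : IPS) (k : nat) (N : nat -> V -> R) (x0 : V)
  (hk : (1 <= k)%nat)
  (hN : forall i, (i < k)%nat -> is_norm (N i))
  (hx0 : x0 <> vzero) (g : V) :
  let mu := fun i => 1 / N i x0 in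
  let Nmax := max_norm k mu N in
  Rinf (fun r => exists y, cone (subdiff Nmax x0) y /\ r = norm2 (vsub g y))
  = Rinf (fun r => exists ys : nat -> V,
            (forall i, (i < k)%nat -> cone (subdiff (N i) x0) (ys i)) /\
            r = norm2 (vsub g (vsum ys k)))
  /\
  Rinf (fun r => exists ys : nat -> V,
            (forall i, (i < k)%nat -> cone (subdiff (N i) x0) (ys i)) /\
            r = norm2 (vsub g (vsum ys k)))
  = Rinf (fun r => exists (tau : nat -> R) (xs : nat -> V),
            (forall i, (i < k)%nat ->
               0 <= tau i /\
               inner (xs i) x0 = tau i * Nmax x0 /\
               dual_norm (N i) (xs i) <= tau i * mu i) /\
            r = norm2 (vsub g (vsum xs k))).
Proof.
  intros mu Nmax.
  assert (HNpos : forall i, (i < k)%nat -> 0 < N i x0) by (intros; apply norm_pos; auto).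
  assert (Hmu : forall i, (i < k)%nat -> 0 < mu i /\ mu i * N i x0 = 1).
  { intros i Hi. specialize (HNpos i Hi). unfold mu. split.
    unfold Rdiv; rewrite Rmult_1_l; apply Rinv_0_lt_compat; auto. field; lra. }
  assert (Hmax1 : Nmax x0 = 1).
  { unfold Nmax, max_norm. apply rmax_const. intros i Hi. apply Hmu. lia. }
  assert (Hmaxge : forall i x, (i < k)%nat -> mu i * N i x <= Nmax x).
  { intros i x Hi. unfold Nmax, max_norm. apply (rmax_ge (fun i => mu i * N i x)). lia. }
  assert (Hph : poshom Nmax).
  { intros a x Ha. unfold Nmax, max_norm. rewrite <- rmax_scal by auto. apply rmax_ext.
    intros i Hi. rewrite norm_poshom; auto. ring. apply hN; lia. }
  set (E1 := fun r => exists y, cone (subdiff Nmax x0) y /\ r = norm2 (vsub g y)).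
  set (E2 := fun r => exists ys : nat -> V,
            (forall i, (i < k)%nat -> cone (subdiff (N i) x0) (ys i)) /\
            r = norm2 (vsub g (vsum ys k))).
  set (E3 := fun r => exists (tau : nat -> R) (xs : nat -> V),
            (forall i, (i < k)%nat ->
               0 <= tau i /\
               inner (xs i) x0 = tau i * Nmax x0 /\
               dual_norm (N i) (xs i) <= tau i * mu i) /\
            r = norm2 (vsub g (vsum xs k))).
  destruct (choice_k vzero (fun i h => (forall x, inner h x <= N i x) /\ inner h x0 = N i x0) k)
    as [h0 Hh0].
  { intros i Hi. apply subgrad_exists; auto. }
  assert (HA : forall r, E2 r -> E1 r).
  { intros r (ys & Hys & ->).
    destruct (choice_k (0, vzero) (fun i p => 0 < fst p /\ subdiff (N i) x0 (snd p) /\ ys i = vscal (fst p) (snd p)) k)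
      as [th Hth].
    { intros i Hi. destruct (Hys i Hi) as (t & h & Ht & Hh & E). exists (t, h); simpl; auto. }
    set (T := rsum (fun i => fst (th i) / mu i) k).
    assert (HT : 0 < T).
    { apply rsum_pos. lia. intros i Hi. destruct (Hth i Hi) as [A _]. destruct (Hmu i Hi).
      apply Rdiv_lt_0_compat; auto. }
    assert (Hys' : vsum ys k = vsum (fun i => vscal (fst (th i)) (snd (th i))) k).
    { apply vsum_ext. intros i Hi. apply Hth; auto. }
    exists (vsum ys k). split; auto.
    exists T, (vscal (/ T) (vsum ys k)). split; auto. split.
    - apply subdiff_char; auto. split.
      + intros x. rewrite inner_scal_l, Hys', inner_vsum_l.
        apply (Rmult_le_reg_l T); auto. rewrite <- Rmult_assoc, Rinv_r, Rmult_1_l by lra.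
        unfold T. rewrite Rmult_comm, <- rsum_scal. apply rsum_le. intros i Hi.
        destruct (Hth i Hi) as (Ht & Hs & _). apply subdiff_char in Hs. 2: apply norm_poshom; auto.
        destruct Hs as [Hs _]. destruct (Hmu i Hi) as [Hm _].
        rewrite inner_scal_l.
        assert (A1 := Hmaxge i x Hi).
        assert (A2 : inner (snd (th i)) x <= Nmax x / mu i).
        { apply (Rmult_le_reg_l (mu i)); auto. replace (mu i * (Nmax x / mu i)) with (Nmax x) by (field; lra).
          specialize (Hs x). nra. }
        replace (Nmax x * (fst (th i) / mu i)) with (fst (th i) * (Nmax x / mu i)) by (field; lra).
        apply Rmult_le_compat_l; lra.
      + rewrite Hmax1, inner_scal_l, Hys', inner_vsum_l. unfold T.
        rewrite (rsum_ext (fun i => inner (vscal (fst (th i)) (snd (th i))) x0) (fun i => fst (th i) / mu i)). fold T. field; lra.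
        intros i Hi. destruct (Hth i Hi) as (Ht & Hs & _). apply subdiff_char in Hs. 2: apply norm_poshom; auto.
        destruct Hs as [_ Hs]. destruct (Hmu i Hi) as [Hm Hm1]. rewrite inner_scal_l, Hs.
        replace (N i x0) with (/ mu i) by (field_simplify_eq; lra). field. lra.
    - apply eq_of_inner. vexpand. field. lra. }
  assert (HB : forall r, E1 r -> E3 r).
  { intros r (y & (t & x & Ht & Hx & ->) & ->).
    apply subdiff_char in Hx; auto. destruct Hx as [Hx1 Hx2]. rewrite Hmax1 in Hx2.
    destruct (decomp k N mu x0 x hk hN hx0 Hmu Hx1 Hx2) as (gs & lam & Hgs & Hsum).
    exists (fun i => t * lam i), (fun i => vscal t (gs i)). split.
    - intros i Hi. destruct (Hgs i Hi) as (H0 & H1 & H2). split; [|split].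
      + apply Rmult_le_pos; lra.
      + rewrite inner_scal_l, H2, Hmax1. ring.
      + apply (dual_norm_le (N i) _ _ x0); auto. intros z.
        rewrite inner_sym, inner_scal_l, Rabs_mult, Rabs_right by lra.
        assert (A : Rabs (inner (gs i) z) <= lam i * (mu i * N i z)).
        { apply (inner_le_abs (fun z => lam i * (mu i * N i z))).
          - intros a w Ha. rewrite norm_poshom; auto. ring.
          - intros w. rewrite norm_opp; auto.
          - auto. }
        replace (t * lam i * mu i * N i z) with (t * (lam i * (mu i * N i z))) by ring.
        apply Rmult_le_compat_l; lra.
    - f_equal. f_equal. rewrite vsum_scal, Hsum. reflexivity. }
  assert (HC : forall r, E3 r -> Rinf E2 <= r).
  { intros r (tau & xs & Hxs & ->).
    assert (Hpos0 : forall i, (i < k)%nat -> forall x, Rabs (inner x (xs i)) <= tau i * mu i * N i x).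
    { intros i Hi x. destruct (onb_exists V) as (u & m & Ho & Hf).
      destruct (functional_bounded (N i) u m (xs i) (hN i Hi) Ho Hf) as [B HB'].
      eapply Rle_trans. apply (dual_norm_spec (N i) (xs i) B x0); auto.
      apply Rmult_le_compat_r. apply hN; auto. apply Hxs; auto. }
    assert (Hcone : forall i, (i < k)%nat -> 0 < tau i -> cone (subdiff (N i) x0) (xs i)).
    { intros i Hi Ht. destruct (Hmu i Hi) as [Hm Hm1].
      exists (tau i * mu i), (vscal (/ (tau i * mu i)) (xs i)). split. apply Rmult_lt_0_compat; auto.
      split.
      - apply subdiff_char. apply norm_poshom; auto. split.
        + intros x. rewrite inner_scal_l, inner_sym.
          apply (Rmult_le_reg_l (tau i * mu i)). apply Rmult_lt_0_compat; auto.
          rewrite <- Rmult_assoc, Rinv_r, Rmult_1_l. 2: apply Rgt_not_eq, Rmult_lt_0_compat; auto.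
          eapply Rle_trans. apply Rle_abs. apply Hpos0; auto.
        + rewrite inner_scal_l. destruct (Hxs i Hi) as (_ & H2 & _). rewrite H2, Hmax1.
          replace (N i x0) with (/ mu i) by (field_simplify_eq; lra). field. lra.
      - apply eq_of_inner. vexpand. field. lra. }
    assert (Hzero : forall i, (i < k)%nat -> ~ 0 < tau i -> xs i = vzero).
    { intros i Hi Ht. assert (E : tau i = 0) by (destruct (Hxs i Hi); lra).
      apply inner_def. assert (A := Hpos0 i Hi (xs i)). rewrite E, !Rmult_0_l in A.
      assert (A2 := inner_pos V (xs i)). assert (A3 := Rle_abs (inner (xs i) (xs i))). lra. }
    set (Hv := fun i => if Rlt_dec 0 (tau i) then (vzero : V) else h0 i).
    set (a := vsub g (vsum xs k)).
    set (Hs := vsum Hv k).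
    apply le_epsilon. intros e He.
    set (D := Rabs (2 * inner a Hs) + inner Hs Hs + 1).
    assert (HD : 1 <= D) by (unfold D; assert (0 <= inner Hs Hs) by apply inner_pos; pose proof (Rabs_pos (2 * inner a Hs)); lra).
    set (dl := e * e / (D + e * e)).
    assert (Hdl : 0 < dl) by (unfold dl; apply Rdiv_lt_0_compat; nra).
    assert (Hdl1 : dl <= 1) by (unfold dl; apply (Rmult_le_reg_r (D + e * e)); [nra|]; field_simplify; nra).
    assert (HdlD : dl * D <= e * e).
    { unfold dl. apply (Rmult_le_reg_r (D + e * e)). nra.
      replace (e * e / (D + e * e) * D * (D + e * e)) with (e * e * D) by (field; nra). nra. }
    assert (HdlD' : dl * (Rabs (2 * inner a Hs) + inner Hs Hs + 1) <= e * e) by (unfold D in HdlD; exact HdlD).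
    clearbody dl. clear HdlD.
    set (ys := fun i => vadd (xs i) (vscal dl (Hv i))).
    assert (Hys : E2 (norm2 (vsub g (vsum ys k)))).
    { exists ys. split; auto. intros i Hi. unfold ys, Hv. destruct (Rlt_dec 0 (tau i)) as [Ht|Ht].
      - assert (E : vadd (xs i) (vscal dl vzero) = xs i) by veq. rewrite E. apply Hcone; auto.
      - rewrite Hzero by auto. exists dl, (h0 i). split; auto. split.
        + apply subdiff_char. apply norm_poshom; auto. apply Hh0; auto.
        + veq. }
    eapply Rle_trans. apply Rinf_le. 2: exact Hys.
    { intros s (ys' & _ & ->). apply norm2_nonneg. }
    assert (Esum : vsub g (vsum ys k) = vsub a (vscal dl Hs)).
    { unfold ys, a, Hs. rewrite vsum_add, vsum_scal. veq. }
    rewrite Esum. unfold norm2.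
    eapply Rle_trans with (sqrt (sqrt (inner a a) * sqrt (inner a a) + e * e)).
    - apply sqrt_le_1. apply inner_pos. assert (0 <= inner a a) by apply inner_pos.
      assert (0 <= sqrt (inner a a)) by apply sqrt_pos. nra.
      rewrite sqrt_sqrt by apply inner_pos. vexpand.
      assert (A1 : - 2 * dl * inner a Hs <= dl * Rabs (2 * inner a Hs)).
      { assert (- (2 * inner a Hs) <= Rabs (2 * inner a Hs)) by (rewrite <- Rabs_Ropp; apply Rle_abs). nra. }
      assert (A2 : dl * dl * inner Hs Hs <= dl * inner Hs Hs).
      { assert (0 <= inner Hs Hs) by apply inner_pos. apply Rmult_le_compat_r; [exact H|]. nra. }
      rewrite (inner_sym _ Hs a). nra.
    - apply sqrt_sum_le. apply sqrt_pos. lra. }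
  assert (H2ne : exists r, E2 r).
  { exists (norm2 (vsub g (vsum h0 k))). exists h0. split; auto. intros i Hi. exists 1, (h0 i).
    split. lra. split. apply subdiff_char. apply norm_poshom; auto. apply Hh0; auto. rewrite vscal_1; auto. }
  assert (H1ne : exists r, E1 r) by (destruct H2ne as [r Hr]; exists r; auto).
  assert (H3ne : exists r, E3 r) by (destruct H1ne as [r Hr]; exists r; auto).
  assert (Hp1 : forall s, E1 s -> 0 <= s) by (intros s (y & _ & ->); apply norm2_nonneg).
  assert (Hp3 : forall s, E3 s -> 0 <= s) by (intros s (t & xs & _ & ->); apply norm2_nonneg).
  assert (I12 : Rinf E1 <= Rinf E2).
  { apply Rinf_ge; auto. intros r Hr. apply Rinf_le; auto. }
  assert (I31 : Rinf E3 <= Rinf E1).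
  { apply Rinf_ge; auto. intros r Hr. apply Rinf_le; auto. }
  assert (I23 : Rinf E2 <= Rinf E3).
  { apply Rinf_ge; auto. }
  fold E1 E2 E3. split; lra.
Qed.
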